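(* Let $n\ge2$, let $\mathrm S\subseteq\{B_{ij}\}\cup\{C_{ij}\}\cup\{D_{ij}\}$ ($1\le i<j\le n$) with associated edge-colored multigraph $\mathscr G_{\mathrm S}$, and let $A\in\mathfrak{su}(n)$ with associated edge-colored multigraph $\mathscr G_A$. Suppose $\mathscr G_{\mathrm S}$ is connected. Then the real Lie algebra generated by $\{A\}\cup\mathrm S$ equals $\mathfrak{su}(n)$ if and only if $\mathscr G_A\cup\mathscr G_{\mathrm S}$ has a self-loop or a cycle containing an odd number of Red edges.
   Context: $E_{ij}$ is the $n\times n$ matrix unit; $B_{ij}=E_{ij}-E_{ji}$, $C_{ij}=\mathrm i(E_{ij}+E_{ji})$, $D_{ij}=\mathrm i(E_{ii}-E_{jj})$; $\mathfrak{su}(n)$ is the real Lie algebra of traceless skew-Hermitian matrices with commutator bracket. Edge-colored multigraphs have node set $\{1,\dots,n\}$ and edges $\{i,j;c\}$ with $c\in\{\text{Blue},\text{Red},\text{Green}\}$ ($\{i,i;c\}$ a self-loop; same endpoints, different colors are distinct edges). $\mathscr G_{\mathrm S}$: a Blue edge $\{i,j\}$ for each $B_{ij}\in\mathrm S$, a Red edge $\{i,j\}$ for each $C_{ij}\in\mathrm S$, Green self-loops $\{i,i\},\{j,j\}$ for each $D_{ij}\in\mathrm S$. $\mathscr G_A$: a Blue edge $\{i,j\}$ ($i\ne j$) iff $\mathrm{Re}(A_{ij})\ne0$, a Red edge $\{i,j\}$ ($i\ne j$) iff $\mathrm{Im}(A_{ij})\ne0$, a Green self-loop $\{i,i\}$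 iff $A_{ii}\neq0$. The union has the union of edge sets. A cycle is a closed walk (alternating sequence of nodes and edges with consecutive endpoints, beginning and ending at the same node); connected means any two nodes are joined by a walk. *)

(* Defs.v *)
From mathcomp Require Import all_boot all_order all_algebra.
From mathcomp Require Import complex.
From mathcomp Require Import reals.
Set Implicit Arguments. Unset Strict Implicit. Unset Printing Implicit Defensive.
Import GRing.Theory Num.Theory.
Local Open Scope ring_scope.
Local Open Scope complex_scope.

Section Defs.
Variables (R : realType) (n : nat).
Notation C := R[i].
Notation M := 'M[C]_n.

Definition Emx (i j : 'I_n) : M := delta_mx i j.
Definition Bmx (i j : 'I_n) : M := Emx i j - Emx j i.
Definition Cmx (i j : 'I_n) : M := 'i *: (Emx i j + Emx j i).
Definition Dmx (i j : 'I_n) : M := 'i *: (Emx i i - Emx j j).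

Definition in_su (X : M) : Prop :=
  (forall i j : 'I_n, (X j i)^* = - X i j) /\ \tr X = 0.

Definition lie_br (X Y : M) : M := X *m Y - Y *m X.

Definition lie_gen (G : M -> Prop) (X : M) : Prop :=
  forall L : M -> Prop,
    (forall Y, G Y -> L Y) ->
    L 0 ->
    (forall Y Z, L Y -> L Z -> L (Y + Z)) ->
    (forall (r : R) Y, L Y -> L (r%:C *: Y)) ->
    (forall Y Z, L Y -> L Z -> L (lie_br Y Z)) ->
    L X.
End Defs.

Inductive gkind := GB | GC | GD.

Definition gen_mx (R : realType) (n : nat) (k : gkind) (i j : 'I_n) : 'M[R[i]]_n :=
  match k with GB => Bmx R i j | GC => Cmx R i j | GD => Dmx R i j end.

Inductive color := Blue | Red | Green.
Definition is_red (c : color) : bool := if c is Red then true else false.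

(* An edge-colored multigraph on 'I_n is given by its edge predicate
   E i j c : "there is an edge {i,j} of color c" (symmetric in i, j). *)
Definition egraph (n : nat) := 'I_n -> 'I_n -> color -> Prop.

(* G_S, where S k i j means that the generator of kind k with indices (i,j)
   belongs to S *)
Definition graph_S (n : nat) (S : gkind -> 'I_n -> 'I_n -> Prop) : egraph n :=
  fun i j c =>
    (c = Blue /\ (S GB i j \/ S GB j i)) \/
    (c = Red /\ (S GC i j \/ S GC j i)) \/
    (c = Green /\ i = j /\ exists k, S GD i k \/ S GD k i).

Definition graph_A (R : realType) (n : nat) (A : 'M[R[i]]_n) : egraph n :=
  fun i j c =>
    (i != j /\ c = Blue /\ ('Re (A i j) != 0 \/ 'Re (A j i) != 0)) \/
    (i != j /\ c = Red /\ ('Im (A i j) != 0 \/ 'Im (A j i) != 0)) \/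
    (i = j /\ c = Green /\ A i i != 0).

Definition graph_union (n : nat) (E F : egraph n) : egraph n :=
  fun i j c => E i j c \/ F i j c.

(* A walk from v is a list of steps (next node, color of the edge used). *)
Fixpoint is_walk (n : nat) (E : egraph n) (v : 'I_n) (p : seq ('I_n * color)) : Prop :=
  match p with
  | [::] => True
  | (w, c) :: p' => E v w c /\ is_walk E w p'
  end.

Definition walk_end (n : nat) (v : 'I_n) (p : seq ('I_n * color)) : 'I_n :=
  last v (map fst p).

Definition connected (n : nat) (E : egraph n) : Prop :=
  forall u v : 'I_n, exists p, is_walk E u p /\ walk_end u p = v.

Definition has_self_loop (n : nat) (E : egraph n) : Prop :=
  exists (i : 'I_n) c, E i i c.

(* a cycle (closed walk) whose number of Red edges, counted with
   multiplicity along the walk, is odd *)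
Definition has_odd_red_cycle (n : nat) (E : egraph n) : Prop :=
  exists (v : 'I_n) p, is_walk E v p /\ walk_end v p = v /\
    odd (count (fun s => is_red s.2) p).

(* Main.v *)
Require Import Defs.
From mathcomp Require Import all_boot all_order all_algebra.
From mathcomp Require Import complex.
From mathcomp Require Import reals.
From mathcomp Require Import ring lra.
From Stdlib Require Import Classical ClassicalEpsilon.
Import GRing.Theory Num.Theory.
Set Implicit Arguments. Unset Strict Implicit. Unset Printing Implicit Defensive.
Local Open Scope ring_scope.
Local Open Scope complex_scope.

Notation Rc := (@complex.Re _).
Notation Ic := (@complex.Im _).

Section CBasics.
Variable R : realType.
Local Notation C := R[i].
Lemma ImD (x y : C) : Ic (x + y) = Ic x + Ic y. Proof. by case: x => a b; case: y => c d. Qed.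
Lemma ReD (x y : C) : Rc (x + y) = Rc x + Rc y. Proof. by case: x => a b; case: y => c d. Qed.
Lemma ImM (x y : C) : Ic (x * y) = Rc x * Ic y + Ic x * Rc y. Proof. by case: x => a b; case: y => c d /=; ring. Qed.
Lemma ReM (x y : C) : Rc (x * y) = Rc x * Rc y - Ic x * Ic y. Proof. by case: x => a b; case: y => c d /=; ring. Qed.
Lemma ImN (x : C) : Ic (- x) = - Ic x. Proof. by case: x => a b. Qed.
Lemma ReN (x : C) : Rc (- x) = - Rc x. Proof. by case: x => a b. Qed.
Lemma Imi : Ic ('i : C) = 1. Proof. by []. Qed.
Lemma Rei : Rc ('i : C) = 0. Proof. by []. Qed.
Lemma ImRC (r : R) : Ic (r%:C) = 0. Proof. by []. Qed.
Lemma ReRC (r : R) : Rc (r%:C) = r. Proof. by []. Qed.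
Lemma ImJ (x : C) : Ic (conjc x) = - Ic x. Proof. by case: x => a b. Qed.
Lemma ReJ (x : C) : Rc (conjc x) = Rc x. Proof. by case: x => a b. Qed.
Lemma C_ext (x y : C) : Rc x = Rc y -> Ic x = Ic y -> x = y.
Proof. by case: x => a b; case: y => c d /= -> ->. Qed.
Lemma Re1 : Rc (1 : C) = 1. Proof. by []. Qed.
Lemma Im1 : Ic (1 : C) = 0. Proof. by []. Qed.
Lemma Re0 : Rc (0 : C) = 0. Proof. by []. Qed.
Lemma Im0 : Ic (0 : C) = 0. Proof. by []. Qed.
Lemma ReNat k : Rc (k%:R : C) = k%:R. Proof. by rewrite -(rmorph_nat (real_complex R)). Qed.
Lemma ImNat k : Ic (k%:R : C) = 0. Proof. by rewrite -(rmorph_nat (real_complex R)). Qed.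
Lemma ReIm_Re (x : C) : 'Re x = (Rc x)%:C. Proof. by rewrite complexRe. Qed.
Lemma ReIm_Im (x : C) : 'Im x = (Ic x)%:C. Proof. by rewrite complexIm. Qed.
Lemma hi : 'i * 'i = -1 :> C.
Proof. by rewrite -expr2 sqr_i. Qed.
Lemma RC_eq0 (r : R) : (r%:C == 0 :> C) = (r == 0).
Proof. by rewrite eq_complex /= eqxx andbT. Qed.
End CBasics.

Section Basics.
Variables (R : realType) (n : nat).
Local Notation C := R[i].
Local Notation M := 'M[C]_n.

Lemma addE (X Y : M) r c : (X + Y) r c = X r c + Y r c. Proof. by rewrite !mxE. Qed.
Lemma oppE (X : M) r c : (- X) r c = - X r c. Proof. by rewrite !mxE. Qed.
Lemma subE (X Y : M) r c : (X - Y) r c = X r c - Y r c. Proof. by rewrite !mxE. Qed.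
Lemma sclE (k : C) (X : M) r c : (k *: X) r c = k * X r c. Proof. by rewrite !mxE. Qed.
Lemma zeroE (r c : 'I_n) : (0 : M) r c = 0. Proof. by rewrite !mxE. Qed.
Lemma EmxE (i j r c : 'I_n) : Emx R i j r c = ((r == i) && (c == j))%:R. Proof. by rewrite !mxE. Qed.

Lemma mulEl (i j : 'I_n) (Y : M) r c : (Emx R i j *m Y) r c = (r == i)%:R * Y j c.
Proof.
rewrite mxE (bigD1 j) //= mxE eqxx andbT big1 ?addr0 // => k /negbTE hk.
by rewrite mxE hk andbF mul0r.
Qed.

Lemma mulEr (i j : 'I_n) (Y : M) r c : (Y *m Emx R i j) r c = Y r i * (c == j)%:R.
Proof.
rewrite mxE (bigD1 i) //= mxE eqxx /= big1 ?addr0 // => k /negbTE hk.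
by rewrite mxE hk mulr0.
Qed.

Lemma brB (a b : 'I_n) (Y : M) r c : lie_br (Bmx R a b) Y r c =
  (r == a)%:R * Y b c - (r == b)%:R * Y a c - (Y r a * (c == b)%:R - Y r b * (c == a)%:R).
Proof. by rewrite /lie_br /Bmx mulmxBl mulmxBr !subE !mulEl !mulEr. Qed.

Lemma brC (a b : 'I_n) (Y : M) r c : lie_br (Cmx R a b) Y r c =
  'i * ((r == a)%:R * Y b c + (r == b)%:R * Y a c - (Y r a * (c == b)%:R + Y r b * (c == a)%:R)).
Proof.
rewrite /lie_br /Cmx -scalemxAl -scalemxAr mulmxDl mulmxDr !(subE, sclE, addE, mulEl, mulEr).
ring.
Qed.

Lemma brD (a b : 'I_n) (Y : M) r c : lie_br (Dmx R a b) Y r c =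
  'i * ((r == a)%:R * Y a c - (r == b)%:R * Y b c - (Y r a * (c == a)%:R - Y r b * (c == b)%:R)).
Proof.
rewrite /lie_br /Dmx -scalemxAl -scalemxAr mulmxBl mulmxBr !(subE, sclE, addE, mulEl, mulEr).
ring.
Qed.

Lemma BE (a b r c : 'I_n) : Bmx R a b r c = ((r == a) && (c == b))%:R - ((r == b) && (c == a))%:R.
Proof. by rewrite /Bmx subE !EmxE. Qed.
Lemma CE (a b r c : 'I_n) : Cmx R a b r c = 'i * (((r == a) && (c == b))%:R + ((r == b) && (c == a))%:R).
Proof. by rewrite /Cmx sclE addE !EmxE. Qed.
Lemma DE (a b r c : 'I_n) : Dmx R a b r c = 'i * (((r == a) && (c == a))%:R - ((r == b) && (c == b))%:R).
Proof. by rewrite /Dmx sclE subE !EmxE. Qed.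

End Basics.

Ltac dec_eqs :=
  repeat match goal with
  | H : is_true (?x != ?x) |- _ => by rewrite eqxx in H
  | |- context [?x == ?x] => rewrite eqxx
  | |- context [?x == ?y] =>
      lazymatch type of x with
      | ordinal _ => case: (eqVneq x y) => [?|?]; [subst x|]
      end
  end.

Ltac solve_ent := dec_eqs; rewrite /= ?andbF ?andbT /=;
  match goal with RR : realType |- _ => ring: (hi RR) end.

Ltac mxent := apply/matrixP => r c;
  rewrite ?(addE, subE, oppE, sclE, zeroE, brB, brC, brD, BE, CE, DE, EmxE).

Section Ids.
Variables (R : realType) (n : nat).
Local Notation C := R[i].
Local Notation M := 'M[C]_n.
Implicit Types (i j k a b : 'I_n).

Lemma Bsym i j : Bmx R j i = - Bmx R i j.
Proof. mxent; solve_ent. Qed.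
Lemma Csym i j : Cmx R j i = Cmx R i j.
Proof. mxent; solve_ent. Qed.
Lemma Dsym i j : Dmx R j i = - Dmx R i j.
Proof. mxent; solve_ent. Qed.

Lemma brBB i j k : i != j -> j != k -> i != k ->
  lie_br (Bmx R i j) (Bmx R j k) = Bmx R i k.
Proof. move=> *; mxent; solve_ent. Qed.
Lemma brBC i j k : i != j -> j != k -> i != k ->
  lie_br (Bmx R i j) (Cmx R j k) = Cmx R i k.
Proof. move=> *; mxent; solve_ent. Qed.
Lemma brCB i j k : i != j -> j != k -> i != k ->
  lie_br (Cmx R i j) (Bmx R j k) = Cmx R i k.
Proof. move=> *; mxent; solve_ent. Qed.
Lemma brCC i j k : i != j -> j != k -> i != k ->
  lie_br (Cmx R i j) (Cmx R j k) = - Bmx R i k.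
Proof. move=> *; mxent; solve_ent. Qed.

Lemma brBC2 a b : a != b -> lie_br (Bmx R a b) (Cmx R a b) = 2%:R *: Dmx R a b.
Proof. move=> *; mxent; solve_ent. Qed.
Lemma brDB2 a b : a != b -> lie_br (Dmx R a b) (Bmx R a b) = 2%:R *: Cmx R a b.
Proof. move=> *; mxent; solve_ent. Qed.
Lemma brDC2 a b : a != b -> lie_br (Dmx R a b) (Cmx R a b) = - (2%:R *: Bmx R a b).
Proof. move=> *; mxent; solve_ent. Qed.
Lemma brDBk a b k : a != b -> a != k -> b != k ->
  lie_br (Dmx R a b) (Bmx R a k) = Cmx R a k.
Proof. move=> *; mxent; solve_ent. Qed.
Lemma brDCk a b k : a != b -> a != k -> b != k ->
  lie_br (Dmx R a b) (Cmx R a k) = - Bmx R a k.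
Proof. move=> *; mxent; solve_ent. Qed.

Lemma TB a b (al be : R) : a != b ->
  (2 * be)%:C *: (al%:C *: Dmx R a b + be%:C *: Cmx R a b)
  + (- al)%:C *: lie_br (Bmx R a b) (al%:C *: Dmx R a b + be%:C *: Cmx R a b)
  = (2 * (al ^+ 2 + be ^+ 2))%:C *: Cmx R a b.
Proof.
move=> *; mxent; rewrite !(rmorphM, rmorphD, rmorphN, rmorphXn, rmorph_nat). solve_ent.
Qed.

Lemma TC a b (al be : R) : a != b ->
  (2 * be)%:C *: (al%:C *: Dmx R a b + be%:C *: Bmx R a b)
  + al%:C *: lie_br (Cmx R a b) (al%:C *: Dmx R a b + be%:C *: Bmx R a b)
  = (2 * (al ^+ 2 + be ^+ 2))%:C *: Bmx R a b.
Proof.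
move=> *; mxent; rewrite !(rmorphM, rmorphD, rmorphN, rmorphXn, rmorph_nat). solve_ent.
Qed.

Definition ZB a b (Y : M) := lie_br (Bmx R a b) (lie_br (Bmx R a b) Y).
Definition ZC a b (Y : M) := lie_br (Cmx R a b) (lie_br (Cmx R a b) Y).

End Ids.

Section Ids.
Variables (R : realType) (n : nat).
Local Notation C := R[i].
Local Notation M := 'M[C]_n.
Implicit Types (i j k a b : 'I_n).
Lemma ZBE a b (Y : M) r c : a != b -> ZB a b Y r c =
  - ((r == a)%:R + (r == b)%:R) * Y r c - ((c == a)%:R + (c == b)%:R) * Y r c
  - 2%:R * ((r == a)%:R * (c == b)%:R * Y b a - (r == a)%:R * (c == a)%:R * Y b b
            - (r == b)%:R * (c == b)%:R * Y a a + (r == b)%:R * (c == a)%:R * Y a b).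
Proof. move=> hab; rewrite /ZB !brB; solve_ent. Qed.

Lemma ZCE a b (Y : M) r c : a != b -> ZC a b Y r c =
  - ((r == a)%:R + (r == b)%:R) * Y r c - ((c == a)%:R + (c == b)%:R) * Y r c
  + 2%:R * ((r == a)%:R * (c == a)%:R * Y b b + (r == a)%:R * (c == b)%:R * Y b a
            + (r == b)%:R * (c == a)%:R * Y a b + (r == b)%:R * (c == b)%:R * Y a a).
Proof. move=> hab; rewrite /ZC !brC; solve_ent. Qed.

Lemma PB a b (X : M) : a != b ->
  ZB a b (ZB a b X) + ZB a b X =
  (6%:R * (X a a - X b b)) *: (Emx R a a - Emx R b b)
  + (6%:R * (X a b + X b a)) *: (Emx R a b + Emx R b a).
Proof. move=> hab; apply/matrixP => r c; rewrite (addE (ZB a b _)) !ZBE // !(addE, subE, sclE, oppE, EmxE); solve_ent. Qed.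

Lemma PC a b (X : M) : a != b ->
  ZC a b (ZC a b X) + ZC a b X =
  (6%:R * (X a a - X b b)) *: (Emx R a a - Emx R b b)
  + (6%:R * (X a b - X b a)) *: (Emx R a b - Emx R b a).
Proof. move=> hab; apply/matrixP => r c; rewrite (addE (ZC a b _)) !ZCE // !(addE, subE, sclE, oppE, EmxE); solve_ent. Qed.
End Ids.

Section LG.
Variables (R : realType) (n : nat) (G : 'M[R[i]]_n -> Prop).
Local Notation C := R[i].
Local Notation M := 'M[C]_n.
Local Notation L := (lie_gen G).

Lemma lg_base X : G X -> L X.
Proof. by move=> GX P hG *; apply: hG. Qed.
Lemma lg0 : L 0.
Proof. move=> P _ h0 *; exact: h0. Qed.
Lemma lgD X Y : L X -> L Y -> L (X + Y).
Proof. move=> hX hY P hG h0 hD hZ hB; exact: (hD _ _ (hX P hG h0 hD hZ hB) (hY P hG h0 hD hZ hB)). Qed.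
Lemma lgZ (r : R) X : L X -> L (r%:C *: X).
Proof. move=> hX P hG h0 hD hZ hB; exact: (hZ _ _ (hX P hG h0 hD hZ hB)). Qed.
Lemma lgbr X Y : L X -> L Y -> L (lie_br X Y).
Proof. move=> hX hY P hG h0 hD hZ hB; exact: (hB _ _ (hX P hG h0 hD hZ hB) (hY P hG h0 hD hZ hB)). Qed.
Lemma lgN X : L X -> L (- X).
Proof. by move=> hX; have := lgZ (-1) hX; rewrite rmorphN1 scaleN1r. Qed.
Lemma lgB X Y : L X -> L Y -> L (X - Y).
Proof. by move=> hX hY; apply: lgD => //; apply: lgN. Qed.
Lemma lgNr X : L (- X) -> L X.
Proof. by move/lgN; rewrite opprK. Qed.
Lemma lg_unscale (r : R) X : r != 0 -> L (r%:C *: X) -> L X.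
Proof.
move=> hr hX; have := lgZ r^-1 hX.
by rewrite scalerA -rmorphM mulVf // rmorph1 scale1r.
Qed.
Lemma lg2 X : L (2%:R *: X) -> L X.
Proof.
rewrite -(rmorph_nat (real_complex R)) => h.
by apply: (lg_unscale _ h); rewrite pnatr_eq0.
Qed.
Lemma lg_sum (I : finType) (P : pred I) (F : I -> M) :
  (forall i, P i -> L (F i)) -> L (\sum_(i | P i) F i).
Proof. move=> h; apply: big_ind; [exact: lg0 | exact: lgD | exact: h]. Qed.
End LG.

Section SU.
Variables (R : realType) (n : nat).
Local Notation C := R[i].
Local Notation M := 'M[C]_n.

Lemma conjM (x y : C) : conjc (x * y) = conjc x * conjc y. Proof. exact: rmorphM. Qed.
Lemma conjD (x y : C) : conjc (x + y) = conjc x + conjc y. Proof. exact: rmorphD. Qed.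
Lemma conjB (x y : C) : conjc (x - y) = conjc x - conjc y. Proof. exact: rmorphB. Qed.
Lemma conjN (x : C) : conjc (- x) = - conjc x. Proof. exact: rmorphN. Qed.
Lemma conjR (r : R) : conjc (r%:C) = r%:C. Proof. exact: conjc_real. Qed.
Lemma conjNat k : conjc (k%:R : C) = k%:R. Proof. exact: conjc_nat. Qed.
Lemma conj_i : conjc ('i : C) = - 'i.
Proof. by apply/eqP; rewrite eq_complex /= oppr0 !eqxx. Qed.

Lemma su_skew (X : M) : in_su X -> forall i j, conjc (X j i) = - X i j.
Proof. by case=> h _ i j; exact: h. Qed.
Lemma su_tr (X : M) : in_su X -> \tr X = 0.
Proof. by case. Qed.
Lemma skewM (X Y : M) : in_su X -> in_su Y -> forall i j,
  conjc ((X *m Y) j i) = (Y *m X) i j.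
Proof.
move=> /su_skew hX /su_skew hY i j; rewrite !mxE rmorph_sum; apply: eq_bigr => k _.
by rewrite rmorphM /= hX hY mulrNN mulrC. Qed.

Lemma su0 : in_su (0 : M).
Proof. by split => [i j|]; rewrite ?mxtrace0 // !zeroE conjc0 oppr0. Qed.
Lemma suD (X Y : M) : in_su X -> in_su Y -> in_su (X + Y).
Proof.
move=> hX' hY'; have hX := su_skew hX'; have hY := su_skew hY'; have tX := su_tr hX'; have tY := su_tr hY'; split => [i j|]; last by rewrite mxtraceD tX tY addr0.
by rewrite !addE conjD hX hY opprD.
Qed.
Lemma suZ (r : R) (X : M) : in_su X -> in_su (r%:C *: X).
Proof.
move=> hX'; have hX := su_skew hX'; have tX := su_tr hX'; split => [i j|]; last by rewrite mxtraceZ tX mulr0.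
by rewrite !sclE conjM conjR hX mulrN.
Qed.
Lemma subr (X Y : M) : in_su X -> in_su Y -> in_su (lie_br X Y).
Proof.
move=> hX hY; split => [i j|]; last by rewrite /lie_br raddfB /= mxtrace_mulC subrr.
by rewrite /lie_br !subE conjB !skewM // opprB.
Qed.

Lemma trE (i j : 'I_n) : \tr (Emx R i j) = (i == j)%:R.
Proof.
rewrite /mxtrace (bigD1 i) //= EmxE eqxx /= big1 ?addr0 // => k /negbTE hk.
by rewrite EmxE hk.
Qed.

Lemma conj_natb (b : bool) : conjc (b%:R : C) = b%:R.
Proof. by rewrite conjc_nat. Qed.

Lemma suB (i j : 'I_n) : i != j -> in_su (Bmx R i j).
Proof.
move=> hij; split => [r c|].
  by rewrite !BE conjB !conjNat; solve_ent.
by rewrite /Bmx raddfB /= !trE (negbTE hij) eq_sym (negbTE hij) subrr.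
Qed.
Lemma suC (i j : 'I_n) : i != j -> in_su (Cmx R i j).
Proof.
move=> hij; split => [r c|].
  by rewrite !CE conjM conjD !conjNat conj_i; solve_ent.
by rewrite /Cmx mxtraceZ raddfD /= !trE (negbTE hij) eq_sym (negbTE hij) addr0 mulr0.
Qed.
Lemma suDm (i j : 'I_n) : in_su (Dmx R i j).
Proof.
split => [r c|].
  by rewrite !DE conjM conjB !conjNat conj_i; solve_ent.
by rewrite /Dmx mxtraceZ raddfB /= !trE !eqxx subrr mulr0.
Qed.

Lemma lg_su (G : M -> Prop) X : (forall Y, G Y -> in_su Y) -> lie_gen G X -> in_su X.
Proof.
move=> hG hX; apply: hX => //; [exact: su0 | exact: suD | exact: suZ | exact: subr].
Qed.

End SU.

Section Sums.
Variables (R : realType) (n : nat).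
Local Notation C := R[i].
Local Notation M := 'M[C]_n.

Lemma sum2a (h : 'I_n -> 'I_n -> C) r c :
  \sum_i \sum_j h i j * ((r == i) && (c == j))%:R = h r c.
Proof.
rewrite (bigD1 r) //= [X in _ + X]big1 ?addr0; last first.
  by move=> i /negbTE hi; apply: big1 => j _; rewrite eq_sym hi /= mulr0.
rewrite (bigD1 c) //= [X in _ + X]big1 ?addr0; last first.
  by move=> j /negbTE hj; rewrite [c == j]eq_sym hj andbF mulr0.
by rewrite !eqxx mulr1.
Qed.

Lemma sum2b (h : 'I_n -> 'I_n -> C) r c :
  \sum_i \sum_j h i j * ((r == j) && (c == i))%:R = h c r.
Proof.
rewrite (bigD1 c) //= [X in _ + X]big1 ?addr0; last first.
  by move=> i /negbTE hi; apply: big1 => j _; rewrite [c == i]eq_sym hi andbF mulr0.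
rewrite (bigD1 r) //= [X in _ + X]big1 ?addr0; last first.
  by move=> j /negbTE hj; rewrite [r == j]eq_sym hj mulr0.
by rewrite !eqxx mulr1.
Qed.

Lemma sumdiag (h : 'I_n -> C) r c :
  \sum_i h i * ((r == i) && (c == i))%:R = (r == c)%:R * h r.
Proof.
rewrite (bigD1 r) //= [X in _ + X]big1 ?addr0; last first.
  by move=> i /negbTE hi; rewrite eq_sym hi mulr0.
by rewrite eqxx /= [c == r]eq_sym mulrC.
Qed.

Lemma Ic_sum (I : Type) (s : seq I) (P : pred I) (F : I -> C) :
  Ic (\sum_(i <- s | P i) F i) = \sum_(i <- s | P i) Ic (F i).
Proof. exact: (big_morph _ (@ImD R) (@Im0 R)). Qed.

Lemma RC_sum (I : Type) (s : seq I) (P : pred I) (F : I -> R) :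
  (\sum_(i <- s | P i) F i)%:C = \sum_(i <- s | P i) (F i)%:C :> C.
Proof. exact: rmorph_sum. Qed.

Lemma cE (x : C) : x = (Rc x)%:C + 'i * (Ic x)%:C.
Proof. exact: complexE. Qed.

Definition Tdec (X : M) (i j : 'I_n) : M :=
  (if (i < j)%N then Rc (X i j) else 0)%:C *: Bmx R i j
  + (if (i < j)%N then Ic (X i j) else 0)%:C *: Cmx R i j.

Lemma decomp (i0 : 'I_n) (X : M) : in_su X ->
  X = \sum_i \sum_j Tdec X i j + \sum_i (- Ic (X i i))%:C *: Dmx R i0 i.
Proof.
move=> hX; have sk := su_skew hX; have tr := su_tr hX.
apply/matrixP => r c; rewrite addE !summxE.
under eq_bigr => i _ do rewrite summxE.
under eq_bigr => i _ do under eq_bigr => j _ do rewrite /Tdec addE (sclE _ (Bmx R i j)) (sclE _ (Cmx R i j)) BE CE.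
have -> : \sum_k ((- Ic (X k k))%:C *: Dmx R i0 k) r c = \sum_k (- Ic (X k k))%:C *
   ('i * (((r == i0) && (c == i0))%:R - ((r == k) && (c == k))%:R)).
  by apply: eq_bigr => k _; rewrite sclE DE.
pose rho := fun i j : 'I_n => (if (i < j)%N then Rc (X i j) else 0)%:C.
pose iota := fun i j : 'I_n => (if (i < j)%N then Ic (X i j) else 0)%:C.
have -> : \sum_(i : 'I_n) \sum_(j : 'I_n) ((if (i < j)%N then Rc (X i j) else 0)%:C *
     (((r == i) && (c == j))%:R - ((r == j) && (c == i))%:R) +
    (if (i < j)%N then Ic (X i j) else 0)%:C *
     ('i * (((r == i) && (c == j))%:R + ((r == j) && (c == i))%:R)))
  = \sum_(i : 'I_n) \sum_(j : 'I_n) ((rho i j + 'i * iota i j) * ((r == i) && (c == j))%:R)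
    + \sum_(i : 'I_n) \sum_(j : 'I_n) (('i * iota i j - rho i j) * ((r == j) && (c == i))%:R).
  rewrite -big_split /=; apply: eq_bigr => i _; rewrite -big_split /=.
  by apply: eq_bigr => j _; rewrite /rho /iota; ring.
rewrite sum2a sum2b.
have -> : \sum_i (- Ic (X i i))%:C * ('i * (((r == i0) && (c == i0))%:R - ((r == i) && (c == i))%:R))
   = 'i * ((r == i0) && (c == i0))%:R * (- Ic (\tr X))%:C
     - 'i * \sum_i (- Ic (X i i))%:C * ((r == i) && (c == i))%:R.
  rewrite /mxtrace Ic_sum -sumrN RC_sum mulr_sumr mulr_sumr -sumrB.
  by apply: eq_bigr => i _; ring.
rewrite sumdiag tr Im0 oppr0 mulr0 add0r /rho /iota /=.
have RC0 : (0 : R)%:C = 0 :> C by [].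
have RCN : forall x : R, (- x)%:C = - x%:C :> C by move=> x; exact: rmorphN.
case: (ltngtP r c) => hrc.
- have hne : (r == c) = false by exact: ltn_eqF.
  rewrite hne (_ : (false%:R : C) = 0) // RC0 {1}[X r c]cE; ring.
- have hne : (r == c) = false by rewrite eq_sym; exact: ltn_eqF.
  have e := sk r c.
  have e1 := congr1 Rc e; have e2 := congr1 Ic e.
  rewrite ReJ ReN in e1; rewrite ImJ ImN in e2.
  have e2' : Ic (X c r) = Ic (X r c) by lra.
  rewrite hne (_ : (false%:R : C) = 0) // RC0 e1 e2' RCN {1}[X r c]cE; ring.
- have E : r = c by apply: val_inj.
  subst c; have e := sk r r.
  have e1 := congr1 Rc e.
  rewrite ReJ ReN in e1.
  have e1' : Rc (X r r) = 0 by lra.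
  rewrite eqxx (_ : (true%:R : C) = 1) // RC0 {1}[X r r]cE e1' RC0 RCN; ring.
Qed.

End Sums.

Section Main.
Variables (R : realType) (n : nat) (S : gkind -> 'I_n -> 'I_n -> Prop) (A : 'M[R[i]]_n).
Hypothesis hS : forall k (i j : 'I_n), S k i j -> (i < j)%N.
Hypothesis hA : in_su A.
Local Notation C := R[i].
Local Notation M := 'M[C]_n.

Definition Gen : M -> Prop :=
  fun Y => Y = A \/ exists k i j, S k i j /\ Y = gen_mx R k i j.
Local Notation L := (lie_gen Gen).

Lemma S_neq k i j : S k i j -> i != j.
Proof. by move=> /hS h; apply/eqP => E; rewrite E ltnn in h. Qed.

Lemma genA : L A. Proof. by apply: lg_base; left. Qed.
Lemma genB i j : S GB i j -> L (Bmx R i j).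
Proof. by move=> h; apply: lg_base; right; exists GB, i, j. Qed.
Lemma genC i j : S GC i j -> L (Cmx R i j).
Proof. by move=> h; apply: lg_base; right; exists GC, i, j. Qed.
Lemma genD i j : S GD i j -> L (Dmx R i j).
Proof. by move=> h; apply: lg_base; right; exists GD, i, j. Qed.

Lemma L_su X : L X -> in_su X.
Proof.
apply: lg_su => Y [->|[k [i [j [h ->]]]]] //.
by case: k h => h /=; [apply: suB | apply: suC | apply: suDm]; apply: (S_neq h).
Qed.

Definition Qp v e := v = e \/ L (Bmx R v e) \/ L (Cmx R v e).

Lemma bracket_step v w e : v != w -> w != e -> v != e ->
  (L (Bmx R v w) \/ L (Cmx R v w)) -> (L (Bmx R w e) \/ L (Cmx R w e)) ->
  L (Bmx R v e) \/ L (Cmx R v e).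
Proof.
move=> h1 h2 h3 [hX|hX] [hY|hY].
- by left; rewrite -(brBB _ h1 h2 h3); apply: lgbr.
- by right; rewrite -(brBC _ h1 h2 h3); apply: lgbr.
- by right; rewrite -(brCB _ h1 h2 h3); apply: lgbr.
- by left; apply: lgNr; rewrite -(brCC _ h1 h2 h3); apply: lgbr.
Qed.

Lemma Qstep v w e c : graph_S S v w c -> Qp w e -> Qp v e.
Proof.
move=> hE hQ; case: (eqVneq v e) => [->|hve]; first by left.
have edge : v = w \/ (v != w /\ (L (Bmx R v w) \/ L (Cmx R v w))).
  case: hE => [[_ [h|h]]|[[_ [h|h]]|[_ [h _]]]].
  - by right; split; [exact: (S_neq h) | left; exact: genB].
  - right; split; first by rewrite eq_sym; exact: (S_neq h).
    by left; rewrite (Bsym _ w v); apply: lgN; exact: genB.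
  - by right; split; [exact: (S_neq h) | right; exact: genC].
  - right; split; first by rewrite eq_sym; exact: (S_neq h).
    by right; rewrite (Csym _ w v); exact: genC.
  - by left.
case: edge => [E|[hvw hX]]; first by rewrite E.
case: (eqVneq w e) => [hwe|hwe]; first by subst w; right.
case: hQ => [hwe'|hY]; first by rewrite hwe' eqxx in hwe.
by right; apply: (bracket_step hvw hwe hve).
Qed.

Lemma F2 (hconn : connected (graph_S S)) u v : u != v -> L (Bmx R u v) \/ L (Cmx R u v).
Proof.
move=> huv; have [p [hp hend]] := hconn u v.
have : Qp u (walk_end u p).
  elim: p u hp {huv hend} => [|[w c] p IH] u /= hp; first by left.
  case: hp => hE hp; apply: (Qstep hE); exact: IH.
by rewrite hend; case => [E|//]; rewrite E eqxx in huv.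
Qed.

Section WithF2.
Hypothesis hF : forall u v, u != v -> L (Bmx R u v) \/ L (Cmx R u v).

Lemma spread a b : a != b -> L (Dmx R a b) -> forall k, k != a -> L (Bmx R a k) /\ L (Cmx R a k).
Proof.
move=> hab hD k hka; case: (eqVneq k b) => [->|hkb].
  case: (hF hab) => h; split => //.
  - by apply: lg2; rewrite -(brDB2 _ hab); apply: lgbr.
  - by apply: lg2; apply: lgNr; rewrite -(brDC2 _ hab); apply: lgbr.
have hak : a != k by rewrite eq_sym.
have hbk : b != k by rewrite eq_sym.
case: (hF hak) => h; split => //.
- by rewrite -(brDBk _ hab hak hbk); apply: lgbr.
- by apply: lgNr; rewrite -(brDCk _ hab hak hbk); apply: lgbr.
Qed.

Lemma allin a b : a != b -> L (Bmx R a b) -> L (Cmx R a b) ->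
  forall i j, i != j -> [/\ L (Bmx R i j), L (Cmx R i j) & L (Dmx R i j)].
Proof.
move=> hab hB hC.
have hD : L (Dmx R a b) by apply: lg2; rewrite -(brBC2 _ hab); apply: lgbr.
have sa := spread hab hD.
have gen : forall i, i != a -> forall j, j != i -> L (Bmx R i j) /\ L (Cmx R i j).
  move=> i hia j hji.
  have [hB' hC'] := sa i hia.
  have hD' : L (Dmx R i a).
    rewrite Dsym; apply: lgN; apply: lg2; rewrite -(brBC2 _ (_ : a != i)).
      exact: lgbr.
    by rewrite eq_sym.
  exact: (spread hia hD' hji).
move=> i j hij.
have [hB2 hC2] : L (Bmx R i j) /\ L (Cmx R i j).
  case: (eqVneq i a) => [E|hia]; last by apply: gen; rewrite // eq_sym.
  by subst i; apply: sa; rewrite eq_sym.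
split => //; apply: lg2; rewrite -(brBC2 _ hij); exact: lgbr.
Qed.

Lemma su_in_L (i0 : 'I_n) :
  (forall i j, i != j -> [/\ L (Bmx R i j), L (Cmx R i j) & L (Dmx R i j)]) ->
  forall X, in_su X -> L X.
Proof.
move=> hall X hX; rewrite (decomp i0 hX); apply: lgD; apply: lg_sum => i _.
  apply: lg_sum => j _; rewrite /Tdec; case: (ltnP i j) => hij.
    have hne : i != j by apply: negbT; exact: (ltn_eqF hij).
    by have [hB hC _] := hall i j hne; apply: lgD; apply: lgZ.
  by rewrite (_ : (0 : R)%:C = 0) // !scale0r addr0; exact: lg0.
case: (eqVneq i0 i) => [<-|h].
  by rewrite /Dmx subrr !scaler0; exact: lg0.
by have [_ _ hD] := hall i0 i h; apply: lgZ.
Qed.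

End WithF2.

End Main.

Definition pb (P : Prop) : bool := if excluded_middle_informative P then true else false.
Lemma pbE (P : Prop) : pb P = true <-> P.
Proof. by rewrite /pb; case: excluded_middle_informative. Qed.
Lemma pbF (P : Prop) : pb P = false <-> ~ P.
Proof. by rewrite /pb; case: excluded_middle_informative. Qed.

Section Parity.
Variables (n : nat) (E : egraph n) (s : 'I_n -> bool).
Hypothesis hE : forall a b c, E a b c -> is_red c = s a (+) s b.
Lemma parity v p : is_walk E v p ->
  odd (count (fun st => is_red st.2) p) = s v (+) s (walk_end v p).
Proof.
elim: p v => [|[w c] p IH] v /=; first by rewrite /walk_end /= addbb.
case=> hvw hp; rewrite oddD oddb (IH w hp) (hE hvw) /walk_end /=.
by rewrite addbA -[s v (+) s w (+) s w]addbA addbb addbF.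
Qed.
End Parity.

Section Proj.
Variables (R : realType) (n : nat) (S : gkind -> 'I_n -> 'I_n -> Prop) (A : 'M[R[i]]_n).
Hypothesis hS : forall k (i j : 'I_n), S k i j -> (i < j)%N.
Hypothesis hA : in_su A.
Local Notation C := R[i].
Local Notation M := 'M[C]_n.
Local Notation L := (lie_gen (Gen S A)).

Lemma imagE (z : C) : Rc z = 0 -> z = 'i * (Ic z)%:C.
Proof. by move=> h; rewrite {1}[z]cE h; ring. Qed.

Lemma conjE (z : C) : conjc z = (Rc z)%:C - 'i * (Ic z)%:C.
Proof. by rewrite {1}[z]cE conjD conjM !conjR conj_i; ring. Qed.

Lemma hRa k : Rc (A k k) = 0.
Proof. have := congr1 Rc (su_skew hA k k); rewrite ReJ ReN => h; lra. Qed.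

Lemma eba a b : A b a = - conjc (A a b).
Proof. by rewrite (su_skew hA b a) opprK. Qed.

Lemma sq0 (al be : R) : al ^+ 2 + be ^+ 2 = 0 -> al = 0 /\ be = 0.
Proof.
move/eqP; rewrite paddr_eq0 ?sqr_ge0 // => /andP [ha hb].
by split; apply/eqP; rewrite -sqrf_eq0.
Qed.

Lemma projB a b : a != b -> L (Bmx R a b) -> ~ L (Cmx R a b) ->
  Ic (A a a) = Ic (A b b) /\ Ic (A a b) = 0.
Proof.
move=> hab hB hC.
have hAL := @genA R n S A.
have hY : L (ZB a b (ZB a b A) + ZB a b A).
  by apply: lgD; do ?apply: lgbr.
rewrite PB // in hY.
have e1 : 6%:R * (A a a - A b b) = (6 * (Ic (A a a) - Ic (A b b)))%:C * 'i.
  by rewrite {1}(imagE (hRa a)) {1}(imagE (hRa b)); ring.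
have e2 : 6%:R * (A a b + A b a) = (6 * (2 * Ic (A a b)))%:C * 'i.
  by rewrite (eba a b) conjE {1}[A a b]cE; ring.
rewrite e1 e2 -!scalerA in hY.
set al := 6 * (Ic (A a a) - Ic (A b b)) in hY.
set be := 6 * (2 * Ic (A a b)) in hY.
have hY' : L (al%:C *: Dmx R a b + be%:C *: Cmx R a b) := hY.
have hT := lgD (lgZ (2 * be) hY') (lgZ (- al) (lgbr hB hY')).
rewrite TB // in hT.
case: (eqVneq (al ^+ 2 + be ^+ 2) 0) => [/sq0 [h1 h2]|hne].
  by rewrite /al /be in h1 h2; split; lra.
exfalso; apply: hC; apply: (lg_unscale _ hT).
by rewrite mulf_neq0 // pnatr_eq0.
Qed.

Lemma projC a b : a != b -> L (Cmx R a b) -> ~ L (Bmx R a b) ->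
  Ic (A a a) = Ic (A b b) /\ Rc (A a b) = 0.
Proof.
move=> hab hC hB.
have hAL := @genA R n S A.
have hY : L (ZC a b (ZC a b A) + ZC a b A).
  by apply: lgD; do ?apply: lgbr.
rewrite PC // in hY.
have e1 : 6%:R * (A a a - A b b) = (6 * (Ic (A a a) - Ic (A b b)))%:C * 'i.
  by rewrite {1}(imagE (hRa a)) {1}(imagE (hRa b)); ring.
have e2 : 6%:R * (A a b - A b a) = (6 * (2 * Rc (A a b)))%:C.
  by rewrite (eba a b) conjE {1}[A a b]cE; ring.
rewrite e1 e2 -!scalerA in hY.
set al := 6 * (Ic (A a a) - Ic (A b b)) in hY.
set be := 6 * (2 * Rc (A a b)) in hY.
have hY' : L (al%:C *: Dmx R a b + be%:C *: Bmx R a b) := hY.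
have hT := lgD (lgZ (2 * be) hY') (lgZ al (lgbr hC hY')).
rewrite TC // in hT.
case: (eqVneq (al ^+ 2 + be ^+ 2) 0) => [/sq0 [h1 h2]|hne].
  by rewrite /al /be in h1 h2; split; lra.
exfalso; apply: hB; apply: (lg_unscale _ hT).
by rewrite mulf_neq0 // pnatr_eq0.
Qed.

End Proj.

Section Walks.
Variables (n : nat).
Lemma walk_mono (E F : egraph n) v p : (forall a b c, E a b c -> F a b c) ->
  is_walk E v p -> is_walk F v p.
Proof.
move=> hEF; elim: p v => [|[w c] p IH] v //= [h1 h2]; split; [exact: hEF | exact: IH].
Qed.
Lemma walk_cat (E : egraph n) v p q : is_walk E v p -> is_walk E (walk_end v p) q ->
  is_walk E v (p ++ q).
Proof.
elim: p v => [|[w c] p IH] v //= [h1 h2] h3; split => //; exact: IH.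
Qed.
Lemma walk_end_cat (v : 'I_n) p q : walk_end v (p ++ q) = walk_end (walk_end v p) q.
Proof. by rewrite /walk_end map_cat last_cat. Qed.
End Walks.

Section Final.
Variables (R : realType) (n : nat) (S : gkind -> 'I_n -> 'I_n -> Prop) (A : 'M[R[i]]_n).
Hypothesis hn : (2 <= n)%N.
Hypothesis hS : forall k (i j : 'I_n), S k i j -> (i < j)%N.
Hypothesis hA : in_su A.
Hypothesis hconn : connected (graph_S S).
Local Notation C := R[i].
Local Notation M := 'M[C]_n.
Local Notation L := (lie_gen (Gen S A)).
Local Notation U := (graph_union (graph_A A) (graph_S S)).

Definition i0 : 'I_n := Ordinal (ltnW hn).
Definition i1 : 'I_n := Ordinal hn.

Lemma notboth : ~ (exists a b, a != b /\ L (Bmx R a b) /\ L (Cmx R a b)) ->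
  ~ (has_self_loop U \/ has_odd_red_cycle U).
Proof.
move=> hnb.
have hF := F2 A hS hconn.
pose tb a b := pb (L (Cmx R a b)).
have x1 : forall a b, a != b -> L (Bmx R a b) <-> tb a b = false.
  move=> a b hab; split.
    by move=> hB; apply/pbF => hC; apply: hnb; exists a, b.
  by move/pbF => hC; case: (hF _ _ hab).
have x1' : forall a b, L (Cmx R a b) <-> tb a b = true.
  by move=> a b; split => [h|/pbE //]; apply/pbE.
have tsym : forall a b, tb a b = tb b a.
  by move=> a b; rewrite /tb (Csym _ a b).
have getX : forall a b, a != b -> if tb a b then L (Cmx R a b) else L (Bmx R a b).
  move=> a b hab; case E: (tb a b); first by apply/x1'.
  by apply/(x1 _ _ hab).
have x3 : forall i j k, i != j -> j != k -> i != k -> tb i k = tb i j (+) tb j k.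
  move=> i j k hij hjk hik.
  have h1 := getX _ _ hij; have h2 := getX _ _ hjk.
  case: (tb i j) h1 => h1; case: (tb j k) h2 => h2 /=.
  - apply/(x1 _ _ hik); apply: lgNr; rewrite -(brCC _ hij hjk hik); exact: lgbr.
  - apply/x1'; rewrite -(brCB _ hij hjk hik); exact: lgbr.
  - apply/x1'; rewrite -(brBC _ hij hjk hik); exact: lgbr.
  - apply/(x1 _ _ hik); rewrite -(brBB _ hij hjk hik); exact: lgbr.
pose sg k := (k != i0) && tb i0 k.
have x4 : forall a b, a != b -> tb a b = sg a (+) sg b.
  move=> a b hab; rewrite /sg.
  case: (eqVneq a i0) => [E|ha].
    subst a; have hb : (b != i0) by rewrite eq_sym.
    by rewrite ?eqxx hb.
  case: (eqVneq b i0) => [E|hb].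
    by subst b; rewrite ?ha /= ?addbF (tsym a i0).
  have hb' : i0 != b by rewrite eq_sym.
  by rewrite ?ha ?hb /= (x3 a i0 b ha hb' hab) (tsym a i0).
have ICeq : forall k, Ic (A k k) = Ic (A i0 i0).
  move=> k; case: (eqVneq k i0) => [->//|hk].
  case: (hF _ _ hk) => h.
    have hC : ~ L (Cmx R k i0) by move=> hC; apply: hnb; exists k, i0.
    by case: (projB hA hk h hC).
  have hB : ~ L (Bmx R k i0) by move=> hB; apply: hnb; exists k, i0.
  by case: (projC hA hk h hB).
have x5 : forall k, A k k = 0.
  have t0 : Ic (A i0 i0) = 0.
    have := congr1 Ic (su_tr hA); rewrite /mxtrace Ic_sum Im0.
    under eq_bigr => k _ do rewrite ICeq.
    rewrite sumr_const card_ord => /eqP; rewrite mulrn_eq0 => /orP [h|/eqP //].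
    by move/eqP: h => h0; have hn2 := hn; rewrite h0 in hn2.
  by move=> k; rewrite (imagE (hRa hA k)) ICeq t0 mulr0.
have x6 : forall a b, a != b -> tb a b = false -> Ic (A a b) = 0 /\ Ic (A b a) = 0.
  move=> a b hab ht.
  have hB := (proj2 (x1 _ _ hab) ht).
  have hC : ~ L (Cmx R a b) by move/x1'; rewrite ht.
  have [_ h] := projB hA hab hB hC.
  by split => //; rewrite (eba hA a b) ImN ImJ opprK.
have x6' : forall a b, a != b -> tb a b = true -> Rc (A a b) = 0 /\ Rc (A b a) = 0.
  move=> a b hab ht.
  have hC := (proj2 (x1' a b) ht).
  have hB : ~ L (Bmx R a b) by move/(x1 _ _ hab); rewrite ht.
  have [_ h] := projC hA hab hC hB.
  by split => //; rewrite (eba hA a b) ReN ReJ h oppr0.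
have x7 : forall a k, ~ S GD a k.
  move=> a k h; have hak := S_neq hS h.
  have hD := @genD R n S A a k h.
  have hka : k != a by rewrite eq_sym.
  have [hB hC] := spread hF hak hD hka.
  by apply: hnb; exists a, k.
have edge : forall a b c, U a b c -> a != b /\ is_red c = sg a (+) sg b.
  move=> a b c [hE|hE].
    case: hE => [[hab [-> hre]]|[[hab [-> him]]|[-> [_ hne]]]].
    - split => //=; rewrite -x4 //; case ht: (tb a b) => //.
      have [r1 r2] := x6' _ _ hab ht.
      by move: hre; rewrite !ReIm_Re !RC_eq0 r1 r2 eqxx; case.
    - split => //=; rewrite -x4 //; case ht: (tb a b) => //.
      have [r1 r2] := x6 _ _ hab ht.
      by move: him; rewrite !ReIm_Im !RC_eq0 r1 r2 eqxx; case.
    - by rewrite x5 eqxx in hne.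
  case: hE => [[-> [h|h]]|[[-> [h|h]]|[-> [_ [k [h|h]]]]]].
  - have hab := S_neq hS h; split => //=; rewrite -x4 //.
    by apply/esym/(x1 _ _ hab); exact: (@genB R n S A a b h).
  - have hab : a != b by rewrite eq_sym; exact: (S_neq hS h).
    split => //=; rewrite -x4 //; apply/esym/(x1 _ _ hab).
    by rewrite (Bsym _ b a); apply: lgN; exact: (@genB R n S A b a h).
  - have hab := S_neq hS h; split => //=; rewrite -x4 //.
    by apply/esym/x1'; exact: (@genC R n S A a b h).
  - have hab : a != b by rewrite eq_sym; exact: (S_neq hS h).
    split => //=; rewrite -x4 //; apply/esym/x1'.
    by rewrite (Csym _ b a); exact: (@genC R n S A b a h).
  - by case: (x7 _ _ h).
  - by case: (x7 _ _ h).
case=> [[i [c hE]]|[v [p [hp [hend hodd]]]]].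
  by have [hne _] := edge _ _ _ hE; rewrite eqxx in hne.
have edge' : forall a b c, U a b c -> is_red c = sg a (+) sg b.
  by move=> a b c /edge [].
by move: hodd; rewrite (parity edge' hp) hend addbb.
Qed.

Lemma dir_le : (has_self_loop U \/ has_odd_red_cycle U) -> forall X, L X <-> in_su X.
Proof.
move=> hcyc X; split; first exact: (L_su hS hA).
move=> hX.
case: (classic (exists a b, a != b /\ L (Bmx R a b) /\ L (Cmx R a b))) => [[a [b [hab [hB hC]]]]|hnb].
  exact: (su_in_L i0 (allin (F2 A hS hconn) hab hB hC)).
by case: (notboth hnb hcyc).
Qed.

End Final.

Section Final2.
Variables (R : realType) (n : nat) (S : gkind -> 'I_n -> 'I_n -> Prop) (A : 'M[R[i]]_n).
Hypothesis hn : (2 <= n)%N.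
Hypothesis hS : forall k (i j : 'I_n), S k i j -> (i < j)%N.
Hypothesis hA : in_su A.
Hypothesis hconn : connected (graph_S S).
Local Notation C := R[i].
Local Notation M := 'M[C]_n.
Local Notation L := (lie_gen (Gen S A)).
Local Notation U := (graph_union (graph_A A) (graph_S S)).

Lemma dir_ge : (forall X, L X <-> in_su X) -> has_self_loop U \/ has_odd_red_cycle U.
Proof.
move=> hL; apply: NNPP => hno.
have hsl : ~ has_self_loop U by move=> h; apply: hno; left.
have hoc : ~ has_odd_red_cycle U by move=> h; apply: hno; right.
have conU : forall u v, exists p, is_walk U u p /\ walk_end u p = v.
  move=> u v; have [p [hp he]] := hconn u v; exists p; split => //.
  by apply: walk_mono hp => a b c h; right.
pose j0 : 'I_n := Ordinal (ltnW hn).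
pose j1 : 'I_n := Ordinal hn.
pose red := fun st : 'I_n * color => is_red st.2.
pose om k := pb (exists p, is_walk U k p /\ walk_end k p = j0 /\ odd (count red p)).
have Wpar : forall k p, is_walk U k p -> walk_end k p = j0 -> odd (count red p) = om k.
  move=> k p hp he.
  have [q [hq hqe]] := conU j0 k.
  have gen : forall p, is_walk U k p -> walk_end k p = j0 -> odd (count red p) = odd (count red q).
    move=> p1 hp1 he1.
    have hcl : ~~ odd (count red (q ++ p1)).
      apply/negP => hodd; apply: hoc; exists j0, (q ++ p1); split.
        by apply: walk_cat => //; rewrite hqe.
      by split => //; rewrite walk_end_cat hqe.
    move: hcl; rewrite count_cat oddD.
    by case: (odd (count red p1)); case: (odd (count red q)).
  case E: (om k).
    move/pbE: E => [p' [hp' [he' ho']]].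
    by rewrite (gen p hp he) -(gen p' hp' he') ho'.
  move/pbF: E => hn'; apply/negbTE/negP => ho; apply: hn'; exists p; done.
have edge_par : forall a b c, U a b c -> om a = is_red c (+) om b.
  move=> a b c hE; have [p [hp he]] := conU b j0.
  have hw : is_walk U a ((b, c) :: p) by split.
  rewrite -(Wpar a ((b, c) :: p) hw he) -(Wpar b p hp he) /=.
  by rewrite oddD oddb.
pose eps k : C := if om k then 'i%R else 1.
have conjiR : conjc ('i%R : C) = - 'i%R by exact: conj_i.
have conj1 : conjc (1 : C) = 1 by exact: rmorph1.
have epsK : forall k, conjc (eps k) * eps k = 1.
  move=> k; rewrite /eps; case: (om k); last by rewrite conj1 mulr1.
  by rewrite conjiR mulNr hi opprK.
have epsP : forall a b (x : C), (om a = om b -> Ic x = 0) -> (om a != om b -> Rc x = 0) ->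
    Ic (conjc (eps a) * x * eps b) = 0.
  move=> a b x h1 h2.
  have epsT : forall k, om k = true -> eps k = 'i%R by move=> k hk; rewrite /eps hk.
  have epsF : forall k, om k = false -> eps k = 1 by move=> k hk; rewrite /eps hk.
  case Ea: (om a); case Eb: (om b); rewrite Ea Eb in h1 h2;
    rewrite ?(epsT _ Ea) ?(epsF _ Ea) ?(epsT _ Eb) ?(epsF _ Eb) ?conjiR ?conj1.
  - have := h1 erefl => hx.
    rewrite !(ImM, ReM, ImN, ReN, Imi, Rei, Re1, Im1) hx; lra.
  - have := h2 isT => hx.
    rewrite !(ImM, ReM, ImN, ReN, Imi, Rei, Re1, Im1) hx; lra.
  - have := h2 isT => hx.
    rewrite !(ImM, ReM, ImN, ReN, Imi, Rei, Re1, Im1) hx; lra.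
  - have := h1 erefl => hx.
    rewrite !(ImM, ReM, ImN, ReN, Imi, Rei, Re1, Im1) hx; lra.
pose Pe (X : M) := forall a b, Ic (conjc (eps a) * X a b * eps b) = 0.
have PA : Pe A.
  move=> a b; apply: epsP.
    move=> hab; case: (eqVneq a b) => [E|hne].
      subst b; case: (eqVneq (A a a) 0) => [->|hnz]; first by rewrite Im0.
      by exfalso; apply: hsl; exists a, Green; left; right; right.
    case: (eqVneq (Ic (A a b)) 0) => // hI; exfalso.
    have hE : U a b Red.
      by left; right; left; split => //; split => //; left; rewrite ReIm_Im RC_eq0.
    by move: (edge_par _ _ _ hE); rewrite hab /=; case: (om b).
  move=> hab; case: (eqVneq a b) => [E|hne]; first by rewrite E eqxx in hab.
  case: (eqVneq (Rc (A a b)) 0) => // hI; exfalso.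
  have hE : U a b Blue.
    by left; left; split => //; split => //; left; rewrite ReIm_Re RC_eq0.
  by move: (edge_par _ _ _ hE); rewrite /= => E; rewrite E eqxx in hab.
have PB' : forall i j, S GB i j -> Pe (Bmx R i j).
  move=> i j h.
  have hE : U i j Blue by right; left; split => //; left.
  have hom := edge_par _ _ _ hE; rewrite /= in hom.
  move=> a b; apply: epsP.
    by move=> _; rewrite BE ImD ImN !ImNat oppr0 addr0.
  move=> hab.
  have h1 : ((a == i) && (b == j)) = false.
    apply/negbTE/negP => /andP [/eqP Ea /eqP Eb]; subst a b.
    by rewrite hom eqxx in hab.
  have h2 : ((a == j) && (b == i)) = false.
    apply/negbTE/negP => /andP [/eqP Ea /eqP Eb]; subst a b.
    by rewrite hom eqxx in hab.
  by rewrite BE h1 h2 ReD ReN !ReNat subrr.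
have PC' : forall i j, S GC i j -> Pe (Cmx R i j).
  move=> i j h.
  have hE : U i j Red by right; right; left; split => //; left.
  have hom := edge_par _ _ _ hE; rewrite /= in hom.
  move=> a b; apply: epsP.
    move=> hab.
    have h1 : ((a == i) && (b == j)) = false.
      apply/negbTE/negP => /andP [/eqP Ea /eqP Eb]; subst a b.
      by move: hab; rewrite hom; case: (om j).
    have h2 : ((a == j) && (b == i)) = false.
      apply/negbTE/negP => /andP [/eqP Ea /eqP Eb]; subst a b.
      by move: hab; rewrite hom; case: (om j).
    by rewrite CE h1 h2 (_ : (false%:R : C) = 0) // addr0 mulr0 Im0.
  move=> _; rewrite CE ReM Rei Imi ImD !ImNat; lra.
have PD : forall i j, ~ S GD i j.
  by move=> i j h; apply: hsl; exists i, Green; right; right; right; split => //; split => //; exists j; left.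
have prod0 : forall Y Z, Pe Y -> Pe Z -> forall a b, Ic (conjc (eps a) * (Y *m Z) a b * eps b) = 0.
  move=> Y Z hY hZ a b; rewrite mxE mulr_sumr mulr_suml Ic_sum big1 // => k _.
  have -> : conjc (eps a) * (Y a k * Z k b) * eps b =
      (conjc (eps a) * Y a k * eps k) * (conjc (eps k) * Z k b * eps b).
    by ring: (epsK k).
  by rewrite ImM hY hZ mulr0 mul0r addr0.
have Pall : forall X, L X -> Pe X.
  move=> X hX; apply: hX.
  - move=> Y [->|[k [i [j [h ->]]]]]; first exact: PA.
    by case: k h => h /=; [exact: PB' | exact: PC' | case: (PD _ _ h)].
  - by move=> a b; rewrite zeroE mulr0 mul0r Im0.
  - by move=> Y Z hY hZ a b; rewrite addE mulrDr mulrDl ImD hY hZ addr0.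
  - move=> r Y hY a b; rewrite sclE.
    have -> : conjc (eps a) * (r%:C * Y a b) * eps b = r%:C * (conjc (eps a) * Y a b * eps b).
      by ring.
    by rewrite ImM hY ImRC mulr0 mul0r addr0.
  - move=> Y Z hY hZ a b; rewrite /lie_br subE mulrBr mulrBl ImD ImN.
    by rewrite (prod0 _ _ hY hZ) (prod0 _ _ hZ hY) oppr0 addr0.
have hne : j0 != j1 by [].
have hD := (proj2 (hL _)) (@suDm R n j0 j1).
have hP := Pall _ hD j0 j0.
have e1 : Dmx R j0 j1 j0 j0 = 'i%R.
  by rewrite DE !eqxx (negbTE hne) /=; ring.
have e2 : conjc (eps j0) * 'i%R * eps j0 = 'i%R by ring: (epsK j0).
by move: hP; rewrite e1 e2 Imi => /eqP; rewrite oner_eq0.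
Qed.

End Final2.

Theorem lemma15 (R : realType) (n : nat) (hn : (2 <= n)%N)
  (S : gkind -> 'I_n -> 'I_n -> Prop)
  (hS : forall k (i j : 'I_n), S k i j -> (i < j)%N)
  (A : 'M[R[i]]_n) (hA : in_su A)
  (hconn : connected (graph_S S)) :
  (forall X : 'M[R[i]]_n,
     lie_gen (fun Y => Y = A \/ exists k i j, S k i j /\ Y = gen_mx R k i j) X
     <-> in_su X)
  <->
  (has_self_loop (graph_union (graph_A A) (graph_S S)) \/
   has_odd_red_cycle (graph_union (graph_A A) (graph_S S))).
Proof.
split.
  exact: (dir_ge hn hconn).
exact: (dir_le hn hS hA hconn).
Qed.
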